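(* Let $r\in\mathbb Q_{\ge0}$, $N\ge 1$, $L\in\mathbb Z$ with $r=L/N$, $g=\gcd(L,N)$, $\ell=L/g$, $n=N/g$. Let $F$ be a $p$-adic field with residue field $\mathbb F_q$ of characteristic $p>n$. Let $P=\lambda^N+\alpha_1\lambda^{N-1}+\dots+\alpha_{ng}\in F[\lambda]$ have slope $r$ (all roots $\lambda_i\in\bar F$ satisfy $|\lambda_i|=q^{-r}$), with $N$ distinct roots $\lambda_1,\dots,\lambda_N$ satisfying $|\lambda_i-\lambda_j|=q^{-r}$ for all $i\ne j$. Let $R=\lambda^g+a_1\lambda^{g-1}+\dots+a_g\in\mathbb F_q[\lambda]$, $a_j=\operatorname{res}_{\ell j}(\alpha_{nj})$, be its $r$-reduction. Then the map $\lambda_j\mapsto t_r(\lambda_j)$ from the roots of $P$ to the roots of $R$ is an $n$-to-$1$ map onto the set of roots of $R$.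
   Context: $\varpi$ a uniformizer of $F$; $\operatorname{ord}$ the valuation on $\bar F$ with $\operatorname{ord}\varpi=1$; $|x|=q^{-\operatorname{ord}x}$. For $x\in\bar F$ with $\operatorname{ord}x\in\mathbb Z$, $\operatorname{ac}(x)=\operatorname{res}(x/\varpi^{\operatorname{ord}x})\in\bar{\mathbb F}_q$ ($\operatorname{ac}(0)=0$), where $\operatorname{res}$ is reduction of integers of $\bar F$ to $\bar{\mathbb F}_q$; $\operatorname{res}_i(x)=\operatorname{ac}(x)$ if $\operatorname{ord}x=i$, else $0$. For $\lambda\in\bar F$ with $\operatorname{ord}\lambda=r$, $t_r(\lambda)=\operatorname{ac}(\lambda^n/\varpi^\ell)\in\bar{\mathbb F}_q^\times$. *)

(* Defs.v *)
(* Abstract axiomatisation of the p-adic setting: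
   Fb plays the role of \bar F (algebraic closure of the p-adic field F),
   F : {pred Fb} is the p-adic field itself, kb plays \bar F_q. *)
From HB Require Import structures.
From mathcomp Require Import all_boot all_order all_algebra.
Set Implicit Arguments. Unset Strict Implicit. Unset Printing Implicit Defensive.
Import Order.TTheory GRing.Theory Num.Theory.
Local Open Scope ring_scope.

Section Setting.
Variables (Fb kb : fieldType) (F : {pred Fb}) (ord : Fb -> rat)
  (varpi : Fb) (res : Fb -> kb).

(* integers of \bar F: ord x >= 0 (with ord 0 = +oo) *)
Definition integral (x : Fb) : Prop := x = 0 \/ 0 <= ord x.

(* Axioms describing: F a field of characteristic 0 (p-adic field), Fb an
   algebraic extension of F (its algebraic closure; Fb is required to be a
   closedFieldType in the theorem), ord a valuation on Fb (defined on nonzero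
   elements, ord 0 = +oo implicitly), integer valued on F^x with ord varpi = 1
   for a uniformizer varpi in F, res the reduction map from the integers of Fb
   onto kb (the residue field of Fb, algebraically closed), kb of
   characteristic p, the residue field of F being finite with q elements and kb
   algebraic over it. *)
Record padic_setting (p q : nat) : Prop := {
  F_subfield : GRing.divring_closed F;
  F_char0 : forall m : nat, (m.+1%:R : Fb) != 0;
  Fb_algebraic : forall x : Fb, exists Q : {poly Fb},
      [/\ Q != 0, Q \is a polyOver F & root Q x];
  ordM : forall x y, x != 0 -> y != 0 -> ord (x * y) = ord x + ord y;
  ordD : forall x y, x != 0 -> y != 0 -> x + y != 0 ->
      Num.min (ord x) (ord y) <= ord (x + y);
  ord_F_int : forall x, x \in F -> x != 0 -> exists z : int, ord x = z%:~R;
  varpi_F : varpi \in F;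
  varpi_neq0 : varpi != 0;
  ord_varpi : ord varpi = 1;
  resD : forall x y, integral x -> integral y -> res (x + y) = res x + res y;
  resM : forall x y, integral x -> integral y -> res (x * y) = res x * res y;
  res1 : res 1 = 1;
  res_eq0 : forall x, integral x -> (res x = 0 <-> (x = 0 \/ 0 < ord x));
  res_surj : forall y : kb, exists x, integral x /\ res x = y;
  kb_char : p \in [pchar kb];
  residue_F_finite : exists s : seq kb, [/\ uniq s, size s = q &
      forall y, (exists x, [/\ x \in F, integral x & res x = y]) <-> y \in s];
  kb_algebraic : forall y : kb, exists Q : {poly kb}, [/\ Q != 0, root Q y &
      forall i, exists x, [/\ x \in F, integral x & res x = Q`_i]]
}.

(* angular component: ac(x) = res(x / varpi^(ord x)) when ord x is an integer,
   ac(0) = 0 (junk value 0 when ord x is not an integer) *)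
Definition ac (x : Fb) : kb :=
  if x == 0 then 0
  else if (denq (ord x) == 1) then res (x / varpi ^ (numq (ord x))) else 0.

Definition res_i (i : int) (x : Fb) : kb :=
  if (x != 0) && (ord x == i%:~R) then ac x else 0.

Definition t_r (n : nat) (l : int) (lam : Fb) : kb := ac (lam ^+ n / varpi ^ l).

(* r-reduction: R = X^g + a_1 X^(g-1) + ... + a_g,
   a_j = res_(l j)(alpha_(n j)), where alpha_k = P`_(N - k)
   (P = X^N + alpha_1 X^(N-1) + ... + alpha_N). *)
Definition r_reduction (N n g : nat) (l : int) (P : {poly Fb}) : {poly kb} :=
  \poly_(i < g.+1) res_i (l * (g - i)%:Z) (P`_(N - n * (g - i))).

End Setting.

Definition gcdLN (L : int) (N : nat) : nat := `|gcdz L N|%N.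

(* Main.v *)
Require Import Defs.
From HB Require Import structures.
From mathcomp Require Import all_boot all_order all_algebra ring.
Import Order.TTheory GRing.Theory Num.Theory.
Set Implicit Arguments. Unset Strict Implicit.
Local Open Scope ring_scope.


Lemma vord1 (Fb kb : fieldType) F ord varpi (res : Fb -> kb) p q
  (Hs : padic_setting F ord varpi res p q) : ord 1 = 0.
Proof.
have := ordM Hs (oner_neq0 Fb) (oner_neq0 Fb); rewrite mulr1 => h.
by have := congr1 (fun t => t - ord 1) h; rewrite subrr addrK.
Qed.

Lemma vordV (Fb kb : fieldType) F ord varpi (res : Fb -> kb) p q
  (Hs : padic_setting F ord varpi res p q) x : x != 0 -> ord x^-1 = - ord x.
Proof.
move=> x0; have := ordM Hs x0 (invr_neq0 x0); rewrite divff // (vord1 Hs) => h.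
by apply/eqP; rewrite -addr_eq0 addrC -h.
Qed.

Lemma vordX (Fb kb : fieldType) F ord varpi (res : Fb -> kb) p q
  (Hs : padic_setting F ord varpi res p q) x k : x != 0 -> ord (x ^+ k) = k%:R * ord x.
Proof.
move=> x0; elim: k => [|k IH]; first by rewrite expr0 (vord1 Hs) mul0r.
by rewrite exprS (ordM Hs) ?expf_neq0 // IH -nat1r mulrDl mul1r.
Qed.

Lemma vordN (Fb kb : fieldType) F ord varpi (res : Fb -> kb) p q
  (Hs : padic_setting F ord varpi res p q) x : x != 0 -> ord (- x) = ord x.
Proof.
move=> x0.
have m1 : ord (-1 : Fb) = 0.
  have n1 : (-1 : Fb) != 0 by rewrite oppr_eq0 oner_neq0.
  have := ordM Hs n1 n1.
  rewrite mulrNN mulr1 (vord1 Hs) => /eqP; rewrite eq_sym -mulr2n mulrn_eq0 /= => /eqP //.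
by rewrite -mulN1r (ordM Hs) ?m1 ?add0r // oppr_eq0 oner_neq0.
Qed.

Lemma integralM (Fb kb : fieldType) F ord varpi (res : Fb -> kb) p q
  (Hs : padic_setting F ord varpi res p q) x y :
  integral ord x -> integral ord y -> integral ord (x * y).
Proof.
case=> [->|hx]; first by rewrite mul0r; left.
case=> [->|hy]; first by rewrite mulr0; left.
have [->|x0] := eqVneq x 0; first by rewrite mul0r; left.
have [->|y0] := eqVneq y 0; first by rewrite mulr0; left.
by right; rewrite (ordM Hs) // addr_ge0.
Qed.

Lemma integralD (Fb kb : fieldType) F ord varpi (res : Fb -> kb) p q
  (Hs : padic_setting F ord varpi res p q) x y :
  integral ord x -> integral ord y -> integral ord (x + y).
Proof.
case=> [->|hx]; first by rewrite add0r.
case=> [->|hy]; first by rewrite addr0; right.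
have [->|x0] := eqVneq x 0; first by rewrite add0r; right.
have [->|y0] := eqVneq y 0; first by rewrite addr0; right.
have [->|s0] := eqVneq (x + y) 0; first by left.
right; apply: le_trans (ordD Hs x0 y0 s0).
by rewrite le_min hx hy.
Qed.

Lemma integralN (Fb kb : fieldType) F ord varpi (res : Fb -> kb) p q
  (Hs : padic_setting F ord varpi res p q) x :
  integral ord x -> integral ord (- x).
Proof.
case=> [->|hx]; first by rewrite oppr0; left.
have [->|x0] := eqVneq x 0; first by rewrite oppr0; left.
by right; rewrite (vordN Hs).
Qed.

Lemma integral1 (Fb : fieldType) (ord : Fb -> rat) : integral ord 0 /\ True.
Proof. by split => //; left. Qed.

Lemma res0 (Fb kb : fieldType) F ord varpi (res : Fb -> kb) p q
  (Hs : padic_setting F ord varpi res p q) : res 0 = 0.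
Proof. by apply/(res_eq0 Hs); [left|left]. Qed.

Lemma resN (Fb kb : fieldType) F ord varpi (res : Fb -> kb) p q
  (Hs : padic_setting F ord varpi res p q) x : integral ord x -> res (- x) = - res x.
Proof.
move=> hx; apply/eqP; rewrite -addr_eq0 -(resD Hs) ?addNr ?(res0 Hs) //.
exact: (integralN Hs).
Qed.

Lemma resX (Fb kb : fieldType) F ord varpi (res : Fb -> kb) p q
  (Hs : padic_setting F ord varpi res p q) x k : integral ord x ->
  integral ord (x ^+ k) /\ res (x ^+ k) = res x ^+ k.
Proof.
move=> hx; elim: k => [|k [IH1 IH2]].
  by rewrite !expr0 (res1 Hs); split => //; right; rewrite (vord1 Hs).
by rewrite !exprS (resM Hs) // IH2; split => //; apply: (integralM Hs).
Qed.


Lemma prod_res (Fb kb : fieldType) F ord varpi (res : Fb -> kb) p q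
  (Hs : padic_setting F ord varpi res p q) (I : Type) (s : seq I) (f : I -> Fb) :
  (forall i, integral ord (f i)) -> forall m,
  integral ord ((\prod_(i <- s) ('X - (f i)%:P))`_m) /\
  res ((\prod_(i <- s) ('X - (f i)%:P))`_m) = (\prod_(i <- s) ('X - (res (f i))%:P))`_m.
Proof.
move=> hf; elim: s => [|a s IH] m.
  rewrite !big_nil !coef1; case: (m == 0)%N => /=.
    by split; [right; rewrite (vord1 Hs) | rewrite (res1 Hs)].
  by split; [left | rewrite (res0 Hs)].
rewrite !big_cons !mulrBl !coefB !coefXM !coefCM.
have [i1 r1] := IH m.
case: m i1 r1 => [|m] i1 r1 /=.
  rewrite !sub0r; split; first by apply: (integralN Hs); apply: (integralM Hs).
  by rewrite (resN Hs) ?(resM Hs) ?r1 //; apply: (integralM Hs).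
have [i2 r2] := IH m.
have iM : integral ord (f a * (\prod_(i <- s) ('X - (f i)%:P))`_m.+1) by apply: (integralM Hs).
split; first by apply: (integralD Hs) => //; apply: (integralN Hs).
by rewrite (resD Hs) ?(resN Hs) ?(resM Hs) ?r1 ?r2 //; apply: (integralN Hs).
Qed.

Lemma prod_scale (R : comRingType) (I : Type) (s : seq I) (f : I -> R) (mu : R) m :
  (\prod_(i <- s) ('X - (mu * f i)%:P))`_m * mu ^+ m =
  mu ^+ (size s) * (\prod_(i <- s) ('X - (f i)%:P))`_m.
Proof.
elim: s m => [|a s IH] m.
  rewrite !big_nil !coef1 expr0 mul1r; case: m => [|m] /=; first by rewrite mulr1.
  by rewrite mul0r.
rewrite !big_cons !mulrBl !coefB !coefXM !coefCM /=.
case: m => [|m] /=.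
  rewrite !sub0r !expr0 mulr1 -(mulr1 (_`_0)) -(expr0 mu) IH.
  by rewrite exprS; ring.
rewrite exprS.
have h1 := IH m; have h2 := IH m.+1.
rewrite exprS in h2.
transitivity (mu * ((\prod_(i <- s) ('X - (mu * f i)%:P))`_m * mu ^+ m) -
   mu * f a * ((\prod_(i <- s) ('X - (mu * f i)%:P))`_m.+1 * (mu * mu ^+ m))); first by ring.
rewrite h1 h2 exprS; ring.
Qed.


Lemma size_ie N : size (index_enum 'I_N) = N.
Proof. by rewrite /index_enum unlock /= -enumT size_enum_ord. Qed.

Unset Implicit Arguments. Set Strict Implicit.

Theorem lemma3p4 (p q : nat) (Fb kb : closedFieldType) (F : {pred Fb})
  (ord : Fb -> rat) (varpi : Fb) (res : Fb -> kb)
  (Hset : padic_setting F ord varpi res p q)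
  (r : rat) (N : nat) (L : int)
  (Hr : 0 <= r) (HN : (1 <= N)%N) (HrLN : r = L%:~R / N%:R)
  (Hp : (N %/ gcdLN L N < p)%N)
  (lam : 'I_N -> Fb) (Hinj : injective lam)
  (HPF : \prod_(i < N) ('X - (lam i)%:P) \is a polyOver F)
  (Hroot_nz : forall i, lam i != 0)
  (Hslope : forall i, ord (lam i) = r)
  (Hdist : forall i j, i != j -> ord (lam i - lam j) = r) :
  let g := gcdLN L N in
  let l := (L %/ g%:Z)%Z in
  let n := (N %/ g)%N in
  let P := \prod_(i < N) ('X - (lam i)%:P) in
  let R := r_reduction ord varpi res N n g l P in
  (forall i, root R (t_r ord varpi res n l (lam i))) /\
  (forall y, root R y -> #|[set i : 'I_N | t_r ord varpi res n l (lam i) == y]| = n).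
Proof.
have HL : 0 <= L.
  move: Hr; rewrite HrLN pmulr_lge0 ?ler0z // invr_gt0 ltr0n; exact: HN.
case: L HL HrLN Hp => [Ln|//] _ HrLN _.
move=> g l n P R.
have gE : g = gcdn Ln N by [].
have gpos : (0 < g)%N by rewrite gE gcdn_gt0 HN orbT.
set ell := (Ln %/ g)%N.
have lE : l = ell%:Z by rewrite /l divz_nat.
have Lg : Ln = (ell * g)%N by rewrite divnK // gE dvdn_gcdl.
have Ng : N = (n * g)%N by rewrite divnK // gE dvdn_gcdr.
have npos : (0 < n)%N by move: HN; rewrite Ng muln_gt0 => /andP[].
have cop : coprime n ell.
  rewrite /coprime; apply/eqP; apply/eqP; rewrite -(eqn_pmul2r gpos).
  by rewrite mul1n muln_gcdl -Ng -Lg gcdnC -gE.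
set rr : rat := ell%:R / n%:R.
have rE : r = rr.
  rewrite HrLN -pmulrn.
  rewrite /rr /= Ng Lg !natrM.
  have gn0 : (g%:R : rat) != 0 by rewrite pnatr_eq0 -lt0n.
  have nn0 : (n%:R : rat) != 0 by rewrite pnatr_eq0 -lt0n.
  by rewrite invfM mulrACA divff // mulr1.
have Hs := Hset.
have [mu Hmu] : exists mu : Fb, mu ^+ n = varpi ^+ ell.
  have [x Hx] := @solve_monicpoly Fb n (fun i => if i == 0%N then varpi ^+ ell else 0) npos.
  exists x; rewrite Hx (bigD1 (Ordinal npos)) //= expr0 mulr1 big1 ?addr0 // => i.
  by rewrite -val_eqE /= => /negbTE ->; rewrite mul0r.
have vp0 : varpi ^+ ell != 0 by rewrite expf_neq0 // (varpi_neq0 Hs).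
have mu0 : mu != 0.
  by apply: contraNneq vp0 => mu0; rewrite -Hmu mu0 expr0n eqn0Ngt npos.
have nn0 : (n%:R : rat) != 0 by rewrite pnatr_eq0 -lt0n.
have ordmu : ord mu = rr.
  have h := vordX Hs n mu0; rewrite Hmu (vordX Hs _ (varpi_neq0 Hs)) (ord_varpi Hs) mulr1 in h.
  by rewrite /rr h mulrC mulKf.
have lE' : varpi ^ l = mu ^+ n by rewrite lE Hmu.
pose u i := lam i / mu.
have lamE i : lam i = mu * u i by rewrite /u mulrC divfK.
have u0 i : u i != 0 by rewrite /u mulf_neq0 ?invr_eq0.
have ordu i : ord (u i) = 0.
  by rewrite /u (ordM Hs) ?invr_eq0 // (vordV Hs) // Hslope rE ordmu subrr.
have intu i : integral ord (u i) by right; rewrite ordu.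
pose w i := res (u i).
have winj : injective w.
  move=> i j wij; apply/eqP; apply/negPn/negP => ij.
  have d0 : lam i - lam j != 0 by rewrite subr_eq0; apply/negP => /eqP /Hinj /eqP; apply/negP.
  have e : u i - u j = (lam i - lam j) / mu by rewrite /u mulrBl.
  have o : ord (u i - u j) = 0.
    by rewrite e (ordM Hs) ?invr_eq0 // (vordV Hs) // Hdist // rE ordmu subrr.
  have iu : integral ord (u i - u j) by right; rewrite o.
  have : res (u i - u j) = 0.
    rewrite (resD Hs) ?(resN Hs) //; last exact: (integralN Hs).
    by apply/eqP; rewrite subr_eq0; apply/eqP.
  move/(res_eq0 Hs iu) => [|]; last by rewrite o ltxx.
  by move/eqP; rewrite e mulf_eq0 invr_eq0 (negbTE d0) (negbTE mu0).
pose U := \prod_(i < N) ('X - (u i)%:P).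
pose W := \prod_(i < N) ('X - (w i)%:P).
have HP : P = \prod_(i < N) ('X - (mu * u i)%:P) by apply: eq_bigr => i _; rewrite -lamE.
have HUP m : P`_m * mu ^+ m = mu ^+ N * U`_m by rewrite HP prod_scale size_ie.
have HWU m : integral ord (U`_m) /\ res (U`_m) = W`_m := prod_res Hs (index_enum _) intu m.
have sizeU : size U = N.+1 by rewrite size_prod_XsubC size_ie.
have PF m : P`_m != 0 -> P`_m \in F.
  move=> h; apply: (allP HPF); apply: mem_nth; rewrite ltnNge.
  by apply: contra h => /(nth_default 0) ->.
have WR : W = R \Po 'X^n.
  apply/polyP => m; rewrite coef_comp_poly_Xn // coef_poly.
  have [hm|hm] := ltnP N m.
    rewrite -(proj2 (HWU m)) nth_default ?sizeU // (res0 Hs).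
    case: ifP => // dv; case: ifP => // lt; exfalso.
    have : (m %/ n * n <= g * n)%N by rewrite leq_mul2r -ltnS lt orbT.
    by rewrite divnK // mulnC -Ng leqNgt hm.
  have Ux : U`_m = P`_m / mu ^+ (N - m).
    have eN : mu ^+ N = mu ^+ (N - m) * mu ^+ m by rewrite -exprD subnK.
    apply: (mulfI (expf_neq0 N mu0)); rewrite -HUP eN.
    field; exact: expf_neq0.
  have Wm : W`_m = res (P`_m / mu ^+ (N - m)) by rewrite -(proj2 (HWU m)) Ux.
  have nN : (n %| N)%N by rewrite Ng dvdn_mulr.
  have hidx : (n %| m)%N -> (N - n * (g - m %/ n))%N = m.
    move=> dv; rewrite mulnBr [(n * (m %/ n))%N]mulnC divnK // -Ng.
    by rewrite subKn.
  have hNm : (n %| m)%N -> (N - m = n * (g - m %/ n))%N.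
    by move=> dv; rewrite mulnBr [(n * (m %/ n))%N]mulnC divnK // -Ng.
  have hrr k : (n * k)%:R * rr = (ell * k)%:R.
    by rewrite /rr !natrM; field.
  have [c0|c0] := eqVneq (P`_m) 0.
    rewrite Wm c0 mul0r (res0 Hs).
    case: ifP => // dv; case: ifP => // lt.
    by rewrite /res_i hidx // c0 eqxx.
  have [z Hz] := ord_F_int Hs (PF m c0) c0.
  have mN0 : mu ^+ (N - m) != 0 by rewrite expf_neq0.
  have x0 : P`_m / mu ^+ (N - m) != 0 by rewrite mulf_neq0 ?invr_eq0.
  have ordx : ord (P`_m / mu ^+ (N - m)) = z%:~R - (N - m)%:R * rr.
    by rewrite (ordM Hs) ?invr_eq0 // (vordV Hs) // (vordX Hs) // ordmu Hz.
  have ox0 : 0 <= ord (P`_m / mu ^+ (N - m)).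
    by have := proj1 (HWU m); rewrite Ux; case=> // /eqP; rewrite (negbTE x0).
  rewrite Wm.
  have [ox|ox] := eqVneq (ord (P`_m / mu ^+ (N - m))) 0.
    have h1 : (z%:~R : rat) * n%:R = ((N - m) * ell)%:R.
      move/eqP: ox; rewrite ordx subr_eq0 => /eqP ->.
      by rewrite /rr natrM mulrA mulfVK.
    have zE : z * n%:Z = ((N - m) * ell)%N%:Z.
      apply: (@intr_inj rat); by rewrite intrM -!pmulrn.
    have e := congr1 absz zE; rewrite abszM /= in e.
    have dNm : (n %| N - m)%N.
      rewrite -(Gauss_dvdl _ cop); apply/dvdnP; exists `|z|%N; by rewrite -e.
    have dv : (n %| m)%N by rewrite -(subKn hm) dvdn_sub.
    rewrite dv.
    have lt : (m %/ n < g.+1)%N.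
      rewrite ltnS; have := leq_div2r n hm; by rewrite Ng mulKn.
    rewrite lt /res_i hidx // c0 /=.
    have zE' : z = ell%:Z * (g - m %/ n)%N%:Z.
      apply/eqP; rewrite -(inj_eq (mulIf (_ : n%:Z != 0))); last by rewrite eqz_nat -lt0n.
      rewrite zE (hNm dv) -!PoszM; apply/eqP; congr Posz; ring.
    rewrite Hz lE zE' eqxx /ac (negbTE c0) Hz zE' denq_int eqxx numq_int.
    by rewrite -PoszM -exprnP (hNm dv) exprM Hmu -exprM.
  have opos : 0 < ord (P`_m / mu ^+ (N - m)) by rewrite lt_def ox ox0.
  have -> : res (P`_m / mu ^+ (N - m)) = 0.
    have ix : integral ord (P`_m / mu ^+ (N - m)) by right.
    by apply/(res_eq0 Hs ix); right.
  case: ifP => // dv; case: ifP => // lt.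
  rewrite /res_i hidx // c0 /= Hz lE.
  case: eqP => // e; move: ox; rewrite ordx e (hNm dv) hrr.
  by rewrite -PoszM -pmulrn subrr eqxx.
have tE i : t_r ord varpi res n l (lam i) = w i ^+ n.
  rewrite /t_r lE' lamE exprMn mulrAC divff ?expf_neq0 // mul1r.
  have un0 : u i ^+ n != 0 by rewrite expf_neq0.
  have ou : ord (u i ^+ n) = 0 by rewrite (vordX Hs) // ordu mulr0.
  rewrite /ac (negbTE un0) ou /=.
  have -> : numq 0 = 0 by [].
  by rewrite expr0z divr1 (proj2 (resX Hs n (intu i))).
split.
  move=> i; rewrite tE /root.
  have -> : R.[w i ^+ n] = W.[w i] by rewrite WR horner_comp hornerXn.
  by rewrite horner_prod (bigD1 i) //= hornerXsubC subrr mul0r.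
move=> y Ry.
have -> : [set i | t_r ord varpi res n l (lam i) == y] = [set i | w i ^+ n == y].
  by apply/setP => i; rewrite !inE tE.
set S := [set i | _].
apply/eqP; rewrite eqn_leq; apply/andP; split.
  have := @max_poly_roots kb ('X^n - y%:P) [seq w i | i <- enum S].
  rewrite size_XnsubC // size_map -cardE ltnS; apply.
  - by rewrite -size_poly_eq0 size_XnsubC.
  - apply/allP => x /mapP [i]; rewrite mem_enum inE => /eqP hi ->.
    by rewrite /root !hornerE hi subrr.
  - by rewrite map_inj_uniq ?enum_uniq.
have [R1 HR1] := factor_theorem _ _ Ry.
have dW : ('X^n - y%:P) %| W.
  by rewrite WR HR1 comp_polyM comp_polyB comp_polyX comp_polyC dvdp_mull.
rewrite /W (bigID (fun i => i \in S)) /= Gauss_dvdpl in dW; last first.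
  apply: (big_ind (fun q => coprimep ('X^n - y%:P) q)).
  - exact: coprimep1.
  - by move=> a b ca cb; rewrite coprimepMr ca cb.
  - move=> i hi; rewrite coprimep_XsubC /root !hornerE subr_eq0.
    by move: hi; rewrite /S inE.
have := dvdp_leq (monic_neq0 (monic_prod_XsubC _ _ _)) dW.
rewrite -big_filter size_prod_XsubC size_XnsubC // ltnS.
have -> : size [seq i <- index_enum 'I_N | i \in S] = #|S| by rewrite cardE /enum_mem.
by [].
Qed.
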